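(* The output $S=S^{(B)}$ of Algorithm 1 satisfies, for each $c\in C$, \[ \mathbb{E}[f_c(S)] \;\ge\; \left(1-\frac1e\right)\mathrm{OPT}. \]
   Context: Setup: $V$ is a finite nonempty ground set, $C$ is a finite nonempty set of ''colors'', $k=|C|$. For each $c\in C$, $f_c\colon 2^V\to\mathbb{R}_{\ge 0}$ is monotone and submodular. $B$ is a positive integer (the budget). $f(T\mid S)=f(S\cup T)-f(S)$ and $f(v\mid S)=f(\{v\}\mid S)$. $\mathrm{OPT}=\max_{S\subseteq V,\,|S|\le B}\min_{c\in C} f_c(S)$. $\Delta_V$ is the probability simplex over $V$. Algorithm 1 (assumes $\mathrm{OPT}$ known): set $S^{(0)}=\emptyset$; for $i=1,\dots,B$: choose any $x^{(i)}\in\Delta_V$ (the choice may depend arbitrarily on the history) such that $\sum_{v\in V}x^{(i)}_v f_c(v\mid S^{(i-1)})\ge \frac1B(\mathrm{OPT}-f_c(S^{(i-1)}))$ for all $c\in C$ (such $x^{(i)}$ always exists); sample $v^{(i)}\sim x^{(i)}$ using fresh randomness; set $S^{(i)}=S^{(i-1)}\cup\{v^{(i)}\}$. Output $S^{(B)}$. *)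

(* Defs.v *)
From HB Require Import structures.
From mathcomp Require Import all_boot all_order all_algebra.
From mathcomp Require Import reals sequences exp.
Set Implicit Arguments. Unset Strict Implicit. Unset Printing Implicit Defensive.
Import Order.TTheory GRing.Theory Num.Theory.
Local Open Scope ring_scope.

Section Defs.
Variables (R : realType) (V C : finType).

Definition monotone_fun (g : {set V} -> R) :=
  forall S T : {set V}, S \subset T -> g S <= g T.
Definition nonneg_fun (g : {set V} -> R) := forall S : {set V}, 0 <= g S.
Definition submodular (g : {set V} -> R) :=
  forall S T : {set V}, g (S :|: T) + g (S :&: T) <= g S + g T.

Definition marg (g : {set V} -> R) (v : V) (S : {set V}) := g (v |: S) - g S.

(* min_{c in C} f_c(S); c0 only witnesses that C is nonempty *)
Definition minf (c0 : C) (f : C -> {set V} -> R) (S : {set V}) : R :=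
  f (Order.arg_min c0 xpredT (fun c => f c S)) S.

(* OPT = max_{|S| <= B} min_c f_c(S)  (set0 witnesses feasibility) *)
Definition OPT (c0 : C) (f : C -> {set V} -> R) (B : nat) : R :=
  minf c0 f (Order.arg_max set0 (fun S : {set V} => (#|S| <= B)%N) (minf c0 f)).

Definition in_simplex (x : V -> R) := (forall v, 0 <= x v) /\ \sum_(v : V) x v = 1.

(* A (history-dependent) choice rule: given the sequence h of previously
   sampled elements, x h is the distribution x^{(i)} used at step i = size h + 1. *)
Fixpoint prA (x : seq V -> V -> R) (prefix rest : seq V) : R :=
  match rest with
  | [::] => 1
  | v :: r => x prefix v * prA x (rcons prefix v) r
  end.
Definition pr (x : seq V -> V -> R) (h : seq V) : R := prA x [::] h.

Definition valid_step (c0 : C) (f : C -> {set V} -> R) (B : nat)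
    (x : seq V -> V -> R) (h : seq V) :=
  in_simplex (x h) /\
  forall c : C, \sum_(v : V) x h v * marg (f c) v [set u in h]
                >= (OPT c0 f B - f c [set u in h]) / B%:R.

Definition alg1_policy (c0 : C) (f : C -> {set V} -> R) (B : nat)
    (x : seq V -> V -> R) :=
  forall h : seq V, (size h < B)%N -> 0 < pr x h -> valid_step c0 f B x h.

Definition expected_value (x : seq V -> V -> R) (B : nat) (g : {set V} -> R) : R :=
  \sum_(t : B.-tuple V) pr x t * g [set u in (t : seq V)].

End Defs.

(* Main.v *)
Require Import Defs.
From HB Require Import structures.
From mathcomp Require Import all_boot all_order all_algebra.
From mathcomp Require Import reals sequences exp.
From mathcomp Require Import lra.
Import Order.TTheory GRing.Theory Num.Theory.
Local Open Scope ring_scope.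

Section Helpers.
Variables (R : realType) (V : finType).

Lemma sum_rcons n (F : seq V -> R) :
  \sum_(t : n.+1.-tuple V) F t = \sum_(t : n.-tuple V) \sum_(v : V) F (rcons t v).
Proof.
rewrite pair_big /=.
pose h := fun p : n.-tuple V * V => [tuple of rcons p.1 p.2].
pose hi := fun t : n.+1.-tuple V =>
  ([tuple of belast (thead t) (behead t)], last (thead t) (behead t)).
rewrite (reindex h) //=.
exists hi => [[t v] _ | t _].
  rewrite /hi /h; case: t => -[|a s] Hs /=.
    by congr pair; apply: val_inj.
  congr pair; first (apply: val_inj => /=; by rewrite belast_rcons).
  by rewrite /= last_rcons.
apply: val_inj => /=; rewrite -lastI.
case: t => -[|a s] Hs /=; first by move: Hs.
by rewrite /thead (tnth_nth a).
Qed.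

Lemma prA_rcons (x : seq V -> V -> R) p r v :
  prA x p (rcons r v) = prA x p r * x (p ++ r) v.
Proof.
elim: r p => [|a r IH] p /=; first by rewrite cats0 mulr1 mul1r.
by rewrite IH mulrA cat_rcons.
Qed.

Lemma pr_rcons (x : seq V -> V -> R) r v : pr x (rcons r v) = pr x r * x r v.
Proof. by rewrite /pr prA_rcons. Qed.

Lemma sum_tuple0 (F : seq V -> R) : \sum_(t : 0.-tuple V) F t = F [::].
Proof.
rewrite (big_pred1 [tuple]) //= => t; rewrite [t]tuple0; exact/esym/eqxx.
Qed.

End Helpers.

Lemma set_rcons (V : finType) (t : seq V) v :
  [set u in rcons t v] = v |: [set u in t].
Proof. by apply/setP => u; rewrite !inE mem_rcons inE. Qed.

Theorem lemma3 (R : realType) (V C : finType) (c0 : C)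
    (f : C -> {set V} -> R) (B : nat) (x : seq V -> V -> R) :
  (0 < #|V|)%N ->
  (0 < B)%N ->
  (forall c, nonneg_fun (f c)) ->
  (forall c, monotone_fun (f c)) ->
  (forall c, submodular (f c)) ->
  alg1_policy c0 f B x ->
  forall c : C, (1 - expR (-1)) * OPT c0 f B <= expected_value x B (f c).
Proof.
move=> _ HB Hnn _ _ Hpol c.
have pr_ge0 : forall s : seq V, (size s <= B)%N -> 0 <= pr x s.
  elim/last_ind => [|s v IH] Hs; first by rewrite /pr /= ler01.
  rewrite pr_rcons.
  have Hs' : (size s < B)%N by rewrite size_rcons in Hs.
  have := IH (ltnW Hs'); rewrite le0r => /orP[/eqP->|H]; first by rewrite mul0r.
  apply: mulr_ge0; first exact: ltW.
  by have [[Hx _] _] := Hpol s Hs' H; apply: Hx.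
have mass : forall n, (n <= B)%N -> \sum_(t : n.-tuple V) pr x t = 1.
  elim=> [|n IH] Hn; first by rewrite sum_tuple0.
  rewrite sum_rcons -(IH (ltnW Hn)); apply: eq_bigr => t _.
  under eq_bigr do rewrite pr_rcons.
  rewrite -mulr_sumr.
  have Hs : (size t < B)%N by rewrite size_tuple.
  have := pr_ge0 t (ltnW Hs); rewrite le0r => /orP[/eqP->|H]; first by rewrite mul0r.
  by have [[_ ->] _] := Hpol t Hs H; rewrite mulr1.
pose g n := \sum_(t : n.-tuple V) pr x t * f c [set u in (t : seq V)].
pose b : R := B%:R^-1.
have Bpos : 0 < B%:R :> R by rewrite ltr0n.
have b_ge0 : 0 <= 1 - b.
  by rewrite subr_ge0 /b invf_le1 // ler1n.
have step : forall n, (n < B)%N -> g n + (OPT c0 f B - g n) / B%:R <= g n.+1.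
  move=> n Hn.
  have -> : g n + (OPT c0 f B - g n) / B%:R =
     \sum_(t : n.-tuple V) (pr x t * f c [set u in (t : seq V)] +
        pr x t * (OPT c0 f B - f c [set u in (t : seq V)]) / B%:R).
    rewrite big_split /= -mulr_suml.
    under [X in _ = _ + X * _]eq_bigr do rewrite mulrBr.
    by rewrite sumrB -mulr_suml mass ?mul1r // ltnW.
  rewrite /g (@sum_rcons R V n (fun s => pr x s * f c [set u in s])); apply: ler_sum => t _.
  under eq_bigr => v _ do rewrite pr_rcons set_rcons
     -[f c (v |: _)](subrK (f c [set u in (t : seq V)])) -mulrA mulrDr.
  rewrite -mulr_sumr big_split /= -mulr_suml.
  have Hs : (size t < B)%N by rewrite size_tuple.
  have := pr_ge0 t (ltnW Hs); rewrite le0r => /orP[/eqP->|H].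
    by rewrite !mul0r add0r.
  have [[_ Hsum] Hc] := Hpol t Hs H.
  rewrite Hsum mul1r -mulrA -mulrDr; apply: ler_wpM2l; first exact: ltW.
  by rewrite [X in X <= _]addrC lerD2r; apply: Hc.
have iter : forall n, (n <= B)%N ->
    OPT c0 f B - g n <= (1 - b) ^+ n * (OPT c0 f B - g 0%N).
  elim=> [|n IH] Hn; first by rewrite expr0 mul1r.
  apply: (le_trans (y := (1 - b) * (OPT c0 f B - g n))).
    have H1 := step n Hn.
    have E : (OPT c0 f B - g n) / B%:R = b * (OPT c0 f B - g n) by rewrite mulrC.
    rewrite mulrBl mul1r; lra.
  by rewrite exprS -mulrA; apply: ler_wpM2l => //; apply: IH; apply: ltnW.
have g0_ge0 : 0 <= g 0%N.
  by rewrite /g (@sum_tuple0 R V (fun s => pr x s * f c [set u in s])) /pr /= mul1r; apply: Hnn.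
have OPT_ge0 : 0 <= OPT c0 f B by rewrite /OPT /minf; apply: Hnn.
have q_ge0 : 0 <= (1 - b) ^+ B by apply: exprn_ge0.
have q_le : (1 - b) ^+ B <= expR (-1).
  have -> : (-1 : R) = B%:R * (- b).
    by rewrite mulrN /b mulfV // gt_eqF.
  rewrite expRM_natl; apply: lerXn2r; rewrite ?nnegrE ?expR_ge0 //.
  by have := expR_ge1Dx (- b).
have H1 := iter B (leqnn B).
have H2 : (1 - b) ^+ B * OPT c0 f B <= expR (-1) * OPT c0 f B.
  by apply: ler_wpM2r.
have H3 : 0 <= (1 - b) ^+ B * g 0%N by apply: mulr_ge0.
rewrite mulrBr in H1.
rewrite mulrBl mul1r.
rewrite /expected_value -/(g B).
lra.
Qed.
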